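(* Let $\alpha,\beta,r,x$ be real numbers and $\lambda$ a positive integer. For all nonnegative integers $n$, $$A_{n}^{\lambda,x}(\alpha,\beta,r)=\frac{(-1)^{n}}{\Gamma(\lambda)}\int_{0}^{\infty}z^{\lambda-1}S_{n}(-\beta xz;\alpha,-\beta,-r)\,e^{-z}\,dz,$$ where $\Gamma$ is the gamma function.
   Context: For a number $t$ and $\alpha$, the generalised factorial is $(t|\alpha)_n=\prod_{j=0}^{n-1}(t-j\alpha)$ for $n\ge 1$ and $(t|\alpha)_0=1$. For parameters $\alpha,\beta,\gamma$, the generalised Stirling numbers $S(n,k,\alpha,\beta,\gamma)$ ($0\le k\le n$) are defined by the polynomial identity $(t|\alpha)_n=\sum_{k=0}^{n}S(n,k,\alpha,\beta,\gamma)\,(t-\gamma|\beta)_k$ in the variable $t$. The generalised exponential polynomials are $S_n(y;\alpha,\beta,r)=\sum_{k=0}^{n}S(n,k,\alpha,\beta,r)\,y^k$. For a nonnegative integer $\lambda$ put $\binom{k+\lambda-1}{k}=\lambda(\lambda+1)\cdots(\lambda+k-1)/k!$ (equal to $1$ for $k=0$). Define $$A^{\lambda,x}_n(\alpha,\beta,\gamma)=\sum_{k=0}^{n}\binom{k+\lambda-1}{k}(-1)^{n+k}\beta^k k!\,S(n,k,\alpha,-\beta,-\gamma)\,x^k .$$ *)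

(* Defs.v *)
From HB Require Import structures.
From mathcomp Require Import all_boot all_order all_algebra.
From mathcomp Require Import all_classical all_reals all_analysis.
From Stdlib Require Import ClassicalEpsilon.
Set Implicit Arguments. Unset Strict Implicit. Unset Printing Implicit Defensive.
Import Order.TTheory GRing.Theory Num.Theory.
Import numFieldNormedType.Exports.
Local Open Scope classical_set_scope.
Local Open Scope ring_scope.

Section Defs.
Variable R : realType.

Definition gfact (t a : R) (n : nat) : R := \prod_(j < n) (t - j%:R * a).

(* generalised Stirling numbers S(n,k,a,b,c): the (unique) coefficients with
   (t|a)_n = sum_{k=0}^n S(n,k,a,b,c) (t-c|b)_k for all t (polynomial identity
   over the infinite field R). *)
Definition gStirling_spec (a b c : R) (S : nat -> nat -> R) : Prop :=
  forall (n : nat) (t : R),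
    gfact t a n = \sum_(k < n.+1) S n k * gfact (t - c) b k.

Definition gStirling (a b c : R) : nat -> nat -> R :=
  epsilon (inhabits (fun _ _ => 0)) (gStirling_spec a b c).

Definition gexpPoly (n : nat) (y a b r : R) : R :=
  \sum_(k < n.+1) gStirling a b r n k * y ^+ k.

(* binom(k + lam - 1, k) = lam (lam+1) ... (lam+k-1) / k! *)
Definition binomL (lam k : nat) : R :=
  (\prod_(i < k) (lam + i)%:R) / (k`!)%:R.

Definition Apoly (lam : nat) (x : R) (n : nat) (a b c : R) : R :=
  \sum_(k < n.+1) binomL lam k * (-1) ^+ (n + k) * b ^+ k * (k`!)%:R
      * gStirling a (- b) (- c) n k * x ^+ k.

Definition Gamma (s : R) : R :=
  \int[lebesgue_measure]_(z in `[0, +oo[) (z `^ (s - 1) * expR (- z)).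

End Defs.

(* Main.v *)
Require Import Defs.
From HB Require Import structures.
From mathcomp Require Import all_boot all_order all_algebra.
From mathcomp Require Import all_classical all_reals all_analysis.
From mathcomp Require Import ring measurable_realfun.
Import Order.TTheory GRing.Theory Num.Theory.
Import numFieldNormedType.Exports.
Local Open Scope classical_set_scope.
Local Open Scope ring_scope.

Section G.
Variable R : realType.

Lemma is_derive_expN (z : R) : is_derive z 1 (fun z => expR (- z)) (- expR (- z)).
Proof.
have h := @is_derive1_comp R expR -%R z (expR (- z)) (-1) (is_derive_expR _)
  (is_deriveNid _ _).
by rewrite mulrN1 in h.
Qed.

Definition gm (m : nat) (z : R) := z ^+ m * expR (- z).

Lemma is_derive_g (m : nat) (z : R) :
  is_derive z 1 (gm m) (m%:R * z ^+ m.-1 * expR (- z) - z ^+ m * expR (- z)).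
Proof.
have h := @is_deriveM R R^o (@id R ^+ m) (fun z => expR (- z)) z 1 _ _
  (is_deriveX m (is_derive_id z 1)) (is_derive_expN z).
have -> : gm m = (@id R ^+ m) * (fun z => expR (- z)).
  by apply/funext => y /=; rewrite !fctE.
apply: is_derive_eq h _.
rewrite !fctE /GRing.scale /=; ring.
Qed.

Fixpoint Fa (m : nat) (z : R) : R :=
  match m with
  | 0 => - expR (- z)
  | k.+1 => - gm k.+1 z + k.+1%:R * Fa k z
  end.

Lemma is_derive_Fa m (z : R) : is_derive z (1:R) (Fa m) (gm m z).
Proof.
elim: m => [|k IH].
  have -> : Fa 0 = - (fun z => expR (- z)) by apply/funext => y; rewrite fctE.
  apply: is_derive_eq (is_deriveN (is_derive_expN z)) _.
  by rewrite /gm expr0 mul1r opprK.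
have -> : Fa k.+1 = - gm k.+1 + (k.+1%:R) *: Fa k.
  by apply/funext => y; rewrite !fctE.
apply: is_derive_eq (is_deriveD (is_deriveN (is_derive_g k.+1 z)) (is_deriveZ k.+1%:R IH)) _.
rewrite /gm /GRing.scale /= -/(gm k z) /gm; ring.
Qed.

Lemma derivable_cont (f : R -> R) : (forall z, derivable f z 1) -> continuous f.
Proof. by move=> h z; apply: differentiable_continuous; apply/derivable1_diffP. Qed.

Lemma cont_Fa m : continuous (Fa m).
Proof. by apply: derivable_cont => z; case: (is_derive_Fa m z). Qed.

Lemma cont_gm m : continuous (gm m).
Proof. by apply: derivable_cont => z; case: (is_derive_g m z). Qed.

Lemma Fa0 m : Fa m 0 = - (m`!)%:R.
Proof.
elim: m => [|k IH] /=; first by rewrite oppr0 expR0.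
by rewrite IH /gm expr0n /= mul0r oppr0 add0r factS natrM mulrN.
Qed.

Lemma gm_ge0 m z : 0 <= z -> 0 <= gm m z.
Proof. by move=> z0; rewrite /gm mulr_ge0 ?exprn_ge0 ?expR_ge0. Qed.

Lemma cvg_inv_pinfty : (x : R)^-1 @[x --> +oo] --> (0:R).
Proof.
have H := (gtr0_cvgV0 (f := @id R) (a := (+oo : set_system R))).
have H1 : \forall x \near (+oo : set_system R), 0 < id x by near=> x.
have := (H _ H1).2 cvg_id.
by move=> h; exact: h.
Unshelve. all: by end_near. Qed.

Lemma cvg_gm m : gm m x @[x --> +oo] --> (0:R).
Proof.
apply: (@squeeze_cvgr _ _ _ _ (cst 0) (fun x => (m.+1`!)%:R * x^-1)); last 2 first.
- exact: cvg_cst.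
- by rewrite -(mulr0 (m.+1`!%:R : R)); apply: cvgMr; exact: cvg_inv_pinfty.
near=> x.
have x0 : 0 < x by [].
apply/andP; split; first exact: gm_ge0 (ltW x0).
have c0 : 0 < (m.+1`!%:R : R) by rewrite ltr0n fact_gt0.
have H : x ^+ m.+1 <= m.+1`!%:R * expR x.
  have h1 : x ^+ m.+1 / m.+1`!%:R <= expR x.
    apply: le_trans (expR_ge1Dxn m (ltW x0)); by rewrite lerDr.
  have -> : x ^+ m.+1 = m.+1`!%:R * (x ^+ m.+1 / m.+1`!%:R).
    field; by rewrite gt_eqF.
  by rewrite ler_wpM2l // ltW.
have ex : 0 < expR x := expR_gt0 x.
rewrite -(ler_pM2r (_ : 0 < x * expR x)); last by rewrite mulr_gt0.
have -> : gm m x * (x * expR x) = x ^+ m.+1.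
  rewrite /gm expRN exprS; field; by rewrite gt_eqF.
have -> : m.+1`!%:R * x^-1 * (x * expR x) = m.+1`!%:R * expR x.
  field; by rewrite gt_eqF.
exact: H.
Unshelve. all: by end_near. Qed.

Lemma cvg_Fa m : Fa m x @[x --> +oo] --> (0:R).
Proof.
elim: m => [|k IH] /=.
  by rewrite -oppr0; apply: cvgN; exact: cvgr_expR.
rewrite -[0]addr0; apply: cvgD.
  by rewrite -oppr0; apply: cvgN; exact: cvg_gm.
by rewrite -(mulr0 (k.+1%:R : R)); apply: cvgMr.
Qed.


Local Notation mu := (@lebesgue_measure R).

Lemma int_gm m : (\int[mu]_(x in `[0%R, +oo[) (gm m x)%:E = (m`!%:R)%:E)%E.
Proof.
rewrite (@ge0_continuous_FTC2y R (gm m) (Fa m) 0 0).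
- by rewrite Fa0 -EFinB sub0r opprK.
- by move=> x; exact: gm_ge0.
- exact/continuous_subspaceT/cont_gm.
- exact: cvg_Fa.
- by move=> x _; case: (is_derive_Fa m x).
- exact/cvg_at_right_filter/cont_Fa.
- by move=> x _; rewrite derive1E (@derive_val _ _ _ _ _ _ _ (is_derive_Fa m x)).
Qed.

Lemma meas_gm m (D : set R) : measurable_fun D (gm m).
Proof. by apply: measurable_funTS; apply: continuous_measurable_fun; exact: cont_gm. Qed.

Lemma integrable_gm m : mu.-integrable `[0%R, +oo[ (EFin \o gm m).
Proof.
apply/integrableP; split; first by apply/measurable_EFinP; exact: meas_gm.
under eq_integral => x.
  rewrite inE /= in_itv /= andbT => x0.
  rewrite /= ger0_norm ?gm_ge0 //.
  over.
by rewrite int_gm ltry.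
Qed.

Lemma Rint_gm m : \int[mu]_(x in `[0%R, +oo[) (gm m x) = (m`!%:R).
Proof. by rewrite /Rintegral int_gm. Qed.


Lemma Rint_sum (I : Type) (s : seq I)
  (f : I -> R -> R) (D := `[0%R, +oo[%classic) : (forall i, mu.-integrable D (EFin \o f i)) ->
  mu.-integrable D (EFin \o (fun z => \sum_(i <- s) f i z)) /\
  \int[mu]_(z in D) (\sum_(i <- s) f i z) = \sum_(i <- s) \int[mu]_(z in D) f i z.
Proof.
move=> fi.
have mD : measurable (D : set (measurableTypeR R)) by exact: measurable_itv.
elim: s => [|a s [IHi IHe]].
  split.
    apply: (eq_integrable mD (cst 0%E)); last exact: integrable0.
    by move=> z _; rewrite /= big_nil.
  rewrite big_nil; under eq_Rintegral do rewrite big_nil.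
  by rewrite /Rintegral integral0.
have e : (fun z => \sum_(i <- a :: s) f i z) = (fun z => f a z + \sum_(i <- s) f i z).
  by apply/funext => z; rewrite big_cons.
rewrite e big_cons; split.
  apply: (eq_integrable mD ((EFin \o f a) \+ (EFin \o (fun z => \sum_(i <- s) f i z)))).
    by move=> z _.
  exact: integrableD.
by rewrite RintegralD // IHe.
Qed.

Lemma alg_id (a b c d e f g h : R) : a != 0 -> b != 0 ->
  c / a * (e * f) * g * a * d * h = e / b * (d * (f * g * h) * (b * c)).
Proof. by move=> a0 b0; field; rewrite a0 b0. Qed.

Lemma factD l k : ((l + k)`! = l`! * \prod_(i < k) (l.+1 + i))%N.
Proof.
elim: k => [|k IH]; first by rewrite addn0 big_ord0 muln1.
rewrite addnS factS IH big_ord_recr /=.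
by rewrite -addSn mulnC -mulnA.
Qed.

End G.
Arguments gm {R}. Arguments Rint_gm {R}. Arguments integrable_gm {R}. Arguments Rint_sum {R}. Arguments alg_id {R}.


Theorem lemma3 (R : realType) (alpha beta r x : R) (lam : nat) (hlam : (0 < lam)%N)
  (n : nat) :
  Apoly lam x n alpha beta r =
  (-1) ^+ n / Gamma lam%:R *
  \int[lebesgue_measure]_(z in `[0, +oo[)
     (z ^+ (lam - 1) * gexpPoly n (- beta * x * z) alpha (- beta) (- r) * expR (- z)).
Proof.
set l := (lam - 1)%N.
have Hl : lam = l.+1 by rewrite /l subn1 prednK.
have hG : Gamma lam%:R = (l`!)%:R :> R.
  rewrite /Gamma -(Rint_gm l); apply: eq_Rintegral => z.
  rewrite inE /= in_itv /= andbT => z0.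
  by rewrite /gm Hl -natr1 addrK powR_mulrn.
set S := gStirling alpha (- beta) (- r) n.
have hI : (fun z => z ^+ (lam - 1) * gexpPoly n (- beta * x * z) alpha (- beta) (- r) * expR (- z))
   = (fun z => \sum_(k < n.+1) (S k * (- beta * x) ^+ k) * gm (l + k) z).
  apply/funext => z; rewrite /gexpPoly mulr_sumr mulr_suml; apply: eq_bigr => k _.
  rewrite /gm exprD !exprMn /S /l; ring.
rewrite hI hG.
rewrite (proj2 (Rint_sum _ _ (fun (k : 'I_n.+1) z => (S k * (- beta * x) ^+ k) * gm (l + k)%N z) _)); last first.
  move=> k.
  apply: (eq_integrable _ (fun z : measurableTypeR R => (S k * (- beta * x) ^+ k)%:E * (EFin \o gm (l + k)%N) z)%E).
  - exact: measurable_itv.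
  - by move=> z _; rewrite /= EFinM.
  apply: integrableZl; first exact: measurable_itv.
  exact: integrable_gm.
rewrite (eq_bigr (fun k : 'I_n.+1 => S k * (- beta * x) ^+ k * ((l + k)`!)%:R)); last first.
  move=> k _; rewrite RintegralZl.
  - by rewrite Rint_gm.
  - have mD : measurable (`[0%R, +oo[%classic : set (measurableTypeR R)) by exact: measurable_itv.
    exact: mD.
  - exact: integrable_gm.
clearbody l; subst lam.
rewrite /Apoly mulr_sumr; apply: eq_bigr => k _.
rewrite factD natrM natr_prod /binomL /S.
set P := \prod_(i < k) _.
rewrite exprD exprMn.
have -> : (- beta) ^+ k = (-1) ^+ k * beta ^+ k by rewrite -exprMn mulN1r.
have k0 : (k`!%:R : R) != 0 by rewrite pnatr_eq0 -lt0n fact_gt0.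
have l0 : (l`!%:R : R) != 0 by rewrite pnatr_eq0 -lt0n fact_gt0.
exact: alg_id.
Qed.
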